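(* For all closed terms $t_0,t_1$, if $t_0\approx_{\emptyset}t_1$ then $t_0\approx^p_{\emptyset}t_1$.
   Context: Terms of $\lambda_S$: $t ::= x \mid \lambda x.t \mid t\,t \mid \mathcal{S}k.t \mid \langle t\rangle$ (shift binds $k$; $\langle\cdot\rangle$ reset), up to $\alpha$-conversion. Values $v::=\lambda x.t$. Pure contexts $E ::= \Box \mid v\,E \mid E\,t$; evaluation contexts $F ::= \Box \mid v\,F \mid F\,t \mid \langle F\rangle$. Reduction: $F[(\lambda x.t)v]\to F[t\{v/x\}]$; $F[\langle E[\mathcal Sk.t]\rangle]\to F[\langle t\{\lambda x.\langle E[x]\rangle/k\}\rangle]$ ($x\notin\mathrm{fv}(E)$); $F[\langle v\rangle]\to F[v]$; $\to^*$ reflexive-transitive closure. Stuck: not a value and irreducible; normal form: value or stuck. Program: term $\langle t\rangle$ (ranged over by $p$). Closures: for $R$ a relation on closed terms, $\widetilde R$ is the smallest relation containing $R$, all $(x,x)$, closed under all term constructors, restricted to closed terms; $\widehat R$ is the smallest relation on closed evaluation contexts with $\Box\widehat R\Box$, $v_0F_0\widehat Rv_1F_1$ if $F_0\widehat RF_1,v_0\widetilde Rv_1$; $F_0t_0\widehat RF_1t_1$ if $F_0\widehat RF_1,t_0\widetilde Rt_1$; $\langle F_0\rangle\widehat R\langle F_1\rangle$ if $F_0\widehat RF_1$. An environmental relation $\mathcal X$ is a set of environments (relations on closed terms) and triples $(\mathcal E,t_0,t_1)$ with $t_0,t_1$ closed, written $t_0\mathcal X_{\mathcal E}t_1$. Relaxed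 bisimilarity $\approx$: environments relate closed values with values and closed stuck terms with stuck terms; $\mathcal X$ is an environmental bisimulation if (1) whenever $t_0\mathcal X_{\mathcal E}t_1$: (a) $t_0\to t_0'$ implies $t_1\to^*t_1'$, $t_0'\mathcal X_{\mathcal E}t_1'$; (b) $t_0=v_0$ implies $t_1\to^*v_1$, $\mathcal E\cup\{(v_0,v_1)\}\in\mathcal X$; (c) $t_0$ stuck implies $t_1\to^*t_1'$ stuck, $\mathcal E\cup\{(t_0,t_1')\}\in\mathcal X$; (d) symmetric conditions; (2) whenever $\mathcal E\in\mathcal X$: (a) $(\lambda x.t_0)\mathcal E(\lambda x.t_1)$, $v_0\widetilde{\mathcal E}v_1$ imply $t_0\{v_0/x\}\mathcal X_{\mathcal E}t_1\{v_1/x\}$; (b) $E_0[\mathcal Sk.t_0]\mathcal EE_1[\mathcal Sk.t_1]$, pure $E_0'\widehat{\mathcal E}E_1'$ imply $\langle t_0\{\lambda x.\langle E_0'[E_0[x]]\rangle/k\}\rangle\mathcal X_{\mathcal E}\langle t_1\{\lambda x.\langle E_1'[E_1[x]]\rangle/k\}\rangle$ ($x$ fresh). $\approx$ is the largest; $t_0\approx_\emptyset t_1$ means $(\emptyset,t_0,t_1)\in\approx$. Program bisimilarity $\approx^p$: environments relate closed values only; $\mathcal X$ is an environmental bisimulation for programs if (1) if $t_0\mathcal X_{\mathcal E}t_1$ and $t_0,t_1$ are not both programs then for all pure $E_0\widehat{\mathcal E}E_1$, $\langle E_0[t_0]\rangle\mathcal X_{\mathcal E}\langle E_1[t_1]\rangle$;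 (2) if $p_0\mathcal X_{\mathcal E}p_1$: (a) $p_0\to p_0'$ (program) implies $p_1\to^*p_1'$ (program), $p_0'\mathcal X_{\mathcal E}p_1'$; (b) $p_0\to v_0$ implies $p_1\to^*v_1$, $\{(v_0,v_1)\}\cup\mathcal E\in\mathcal X$; (c) symmetric conditions; (3) for $\mathcal E\in\mathcal X$, $(\lambda x.t_0)\mathcal E(\lambda x.t_1)$, $v_0\widetilde{\mathcal E}v_1$ imply $t_0\{v_0/x\}\mathcal X_{\mathcal E}t_1\{v_1/x\}$. $\approx^p$ is the largest; $t_0\approx^p_\emptyset t_1$ means $(\emptyset,t_0,t_1)\in\approx^p$. *)

(* Defs.v *)
From Stdlib Require Import Arith.

(* Terms up to alpha-conversion: de Bruijn indices.
   [Lam b] binds index 0 in b; [Shift b] binds the continuation k as index 0 in b. *)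
Inductive term : Type :=
| Var : nat -> term
| Lam : term -> term
| App : term -> term -> term
| Shift : term -> term
| Reset : term -> term.

Fixpoint lift (c : nat) (t : term) : term :=
  match t with
  | Var n => if Nat.ltb n c then Var n else Var (S n)
  | Lam b => Lam (lift (S c) b)
  | App t1 t2 => App (lift c t1) (lift c t2)
  | Shift b => Shift (lift (S c) b)
  | Reset b => Reset (lift c b)
  end.

(* subst k u t : capture-avoiding substitution of u for index k in t
   (removing the binder: indices above k are decremented). *)
Fixpoint subst (k : nat) (u : term) (t : term) : term :=
  match t with
  | Var n => if Nat.eqb n k then u
             else if Nat.ltb k n then Var (pred n) else Var n
  | Lam b => Lam (subst (S k) (lift 0 u) b)
  | App t1 t2 => App (subst k u t1) (subst k u t2)
  | Shift b => Shift (subst (S k) (lift 0 u) b)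
  | Reset b => Reset (subst k u b)
  end.

(* t{v/x} where t is the body of the binder *)
Definition inst (b v : term) : term := subst 0 v b.

Fixpoint closed_at (n : nat) (t : term) : Prop :=
  match t with
  | Var m => m < n
  | Lam b => closed_at (S n) b
  | App t1 t2 => closed_at n t1 /\ closed_at n t2
  | Shift b => closed_at (S n) b
  | Reset b => closed_at n b
  end.

Definition closed (t : term) : Prop := closed_at 0 t.

Definition is_value (t : term) : Prop := exists b, t = Lam b.

Definition is_program (t : term) : Prop := exists b, t = Reset b.

(* Evaluation contexts F ::= [] | v F | F t | <F>.
   [CAppR b F] stands for (Lam b) F (value on the left).
   Pure contexts E are those without [CReset]. *)
Inductive ctx : Type :=
| Hole : ctx
| CAppR : term -> ctx -> ctx
| CAppL : ctx -> term -> ctx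
| CReset : ctx -> ctx.

Fixpoint plug (F : ctx) (t : term) : term :=
  match F with
  | Hole => t
  | CAppR b F' => App (Lam b) (plug F' t)
  | CAppL F' u => App (plug F' t) u
  | CReset F' => Reset (plug F' t)
  end.

Fixpoint pure (F : ctx) : Prop :=
  match F with
  | Hole => True
  | CAppR _ F' => pure F'
  | CAppL F' _ => pure F'
  | CReset _ => False
  end.

Fixpoint lift_ctx (c : nat) (F : ctx) : ctx :=
  match F with
  | Hole => Hole
  | CAppR b F' => CAppR (lift (S c) b) (lift_ctx c F')
  | CAppL F' u => CAppL (lift_ctx c F') (lift c u)
  | CReset F' => CReset (lift_ctx c F')
  end.

(* The captured continuation  lambda x. < E[x] >  (x fresh for E). *)
Definition cont (E : ctx) : term := Lam (Reset (plug (lift_ctx 0 E) (Var 0))).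

(* lambda x. < E'[E[x]] > (x fresh) *)
Definition cont2 (E' E : ctx) : term :=
  Lam (Reset (plug (lift_ctx 0 E') (plug (lift_ctx 0 E) (Var 0)))).

Inductive step : term -> term -> Prop :=
| step_beta : forall F b v, is_value v ->
    step (plug F (App (Lam b) v)) (plug F (inst b v))
| step_shift : forall F E b, pure E ->
    step (plug F (Reset (plug E (Shift b)))) (plug F (Reset (inst b (cont E))))
| step_reset : forall F v, is_value v ->
    step (plug F (Reset v)) (plug F v).

Inductive steps : term -> term -> Prop :=
| steps_refl : forall t, steps t t
| steps_cons : forall t t' t'', step t t' -> steps t' t'' -> steps t t''.

Definition stuck (t : term) : Prop := ~ is_value t /\ forall t', ~ step t t'.

Definition rel := term -> term -> Prop.

Definition empty_env : rel := fun _ _ => False.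

Definition env_add (E : rel) (a b : term) : rel :=
  fun x y => E x y \/ (x = a /\ y = b).

Inductive ctx_clos (R : rel) : rel :=
| cc_rel : forall a b, R a b -> ctx_clos R a b
| cc_var : forall n, ctx_clos R (Var n) (Var n)
| cc_lam : forall a b, ctx_clos R a b -> ctx_clos R (Lam a) (Lam b)
| cc_app : forall a a' b b', ctx_clos R a b -> ctx_clos R a' b' ->
    ctx_clos R (App a a') (App b b')
| cc_shift : forall a b, ctx_clos R a b -> ctx_clos R (Shift a) (Shift b)
| cc_reset : forall a b, ctx_clos R a b -> ctx_clos R (Reset a) (Reset b).

Definition tilde (R : rel) : rel :=
  fun a b => ctx_clos R a b /\ closed a /\ closed b.

Inductive hat (R : rel) : ctx -> ctx -> Prop :=
| hat_hole : hat R Hole Hole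
| hat_appR : forall b0 b1 F0 F1, hat R F0 F1 -> tilde R (Lam b0) (Lam b1) ->
    hat R (CAppR b0 F0) (CAppR b1 F1)
| hat_appL : forall F0 F1 u0 u1, hat R F0 F1 -> tilde R u0 u1 ->
    hat R (CAppL F0 u0) (CAppL F1 u1)
| hat_reset : forall F0 F1, hat R F0 F1 -> hat R (CReset F0) (CReset F1).

Record envrel : Type := {
  envs : rel -> Prop;
  trip : rel -> term -> term -> Prop
}.

Definition relaxed_env (E : rel) : Prop :=
  forall a b, E a b -> closed a /\ closed b /\
    ((is_value a /\ is_value b) \/ (stuck a /\ stuck b)).

Definition relaxed_envrel (X : envrel) : Prop :=
  (forall E, envs X E -> relaxed_env E) /\
  (forall E t0 t1, trip X E t0 t1 -> relaxed_env E /\ closed t0 /\ closed t1).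

Definition relaxed_bisim (X : envrel) : Prop :=
  relaxed_envrel X /\
  (* (1) *)
  (forall E t0 t1, trip X E t0 t1 ->
     (* (a) *)
     (forall t0', step t0 t0' -> exists t1', steps t1 t1' /\ trip X E t0' t1') /\
     (* (b) *)
     (is_value t0 -> exists v1, is_value v1 /\ steps t1 v1 /\ envs X (env_add E t0 v1)) /\
     (* (c) *)
     (stuck t0 -> exists t1', stuck t1' /\ steps t1 t1' /\ envs X (env_add E t0 t1')) /\
     (* (d) symmetric conditions *)
     (forall t1', step t1 t1' -> exists t0', steps t0 t0' /\ trip X E t0' t1') /\
     (is_value t1 -> exists v0, is_value v0 /\ steps t0 v0 /\ envs X (env_add E v0 t1)) /\
     (stuck t1 -> exists t0', stuck t0' /\ steps t0 t0' /\ envs X (env_add E t0' t1))) /\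
  (* (2) *)
  (forall E, envs X E ->
     (* (a) *)
     (forall b0 b1 v0 v1, E (Lam b0) (Lam b1) -> is_value v0 -> is_value v1 ->
        tilde E v0 v1 -> trip X E (inst b0 v0) (inst b1 v1)) /\
     (* (b) *)
     (forall E0 E1 s0 s1, pure E0 -> pure E1 ->
        E (plug E0 (Shift s0)) (plug E1 (Shift s1)) ->
        forall E0' E1', pure E0' -> pure E1' -> hat E E0' E1' ->
        trip X E (Reset (inst s0 (cont2 E0' E0))) (Reset (inst s1 (cont2 E1' E1))))).

(* t0 ≈_E t1 : (E,t0,t1) belongs to the largest relaxed bisimulation *)
Definition relaxed_bisimilar (E : rel) (t0 t1 : term) : Prop :=
  exists X, relaxed_bisim X /\ trip X E t0 t1.

Definition prog_env (E : rel) : Prop :=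
  forall a b, E a b -> closed a /\ closed b /\ is_value a /\ is_value b.

Definition prog_envrel (X : envrel) : Prop :=
  (forall E, envs X E -> prog_env E) /\
  (forall E t0 t1, trip X E t0 t1 -> prog_env E /\ closed t0 /\ closed t1).

Definition prog_bisim (X : envrel) : Prop :=
  prog_envrel X /\
  (forall E t0 t1, trip X E t0 t1 -> ~ (is_program t0 /\ is_program t1) ->
     forall E0 E1, pure E0 -> pure E1 -> hat E E0 E1 ->
     trip X E (Reset (plug E0 t0)) (Reset (plug E1 t1))) /\
  (forall E p0 p1, is_program p0 -> is_program p1 -> trip X E p0 p1 ->
     (forall p0', is_program p0' -> step p0 p0' ->
        exists p1', is_program p1' /\ steps p1 p1' /\ trip X E p0' p1') /\
     (forall v0, is_value v0 -> step p0 v0 ->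
        exists v1, is_value v1 /\ steps p1 v1 /\ envs X (env_add E v0 v1)) /\
     (forall p1', is_program p1' -> step p1 p1' ->
        exists p0', is_program p0' /\ steps p0 p0' /\ trip X E p0' p1') /\
     (forall v1, is_value v1 -> step p1 v1 ->
        exists v0, is_value v0 /\ steps p0 v0 /\ envs X (env_add E v0 v1))) /\
  (forall E, envs X E ->
     forall b0 b1 v0 v1, E (Lam b0) (Lam b1) -> is_value v0 -> is_value v1 ->
       tilde E v0 v1 -> trip X E (inst b0 v0) (inst b1 v1)).

Definition program_bisimilar (E : rel) (t0 t1 : term) : Prop :=
  exists X, prog_bisim X /\ trip X E t0 t1.

(* Main.v *)
Require Import Defs.
From Stdlib Require Import Arith Lia Classical FunctionalExtensionality PropExtensionality.

Fixpoint comp (G F : ctx) : ctx :=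
  match G with
  | Hole => F
  | CAppR b G' => CAppR b (comp G' F)
  | CAppL G' u => CAppL (comp G' F) u
  | CReset G' => CReset (comp G' F)
  end.

Lemma plug_comp : forall G F t, plug (comp G F) t = plug G (plug F t).
Proof. induction G; intros; simpl; try rewrite IHG; auto. Qed.

Lemma pure_comp : forall G F, pure G -> pure F -> pure (comp G F).
Proof. induction G; intros; simpl in *; auto. Qed.

Lemma lift_ctx_comp : forall c G F, lift_ctx c (comp G F) = comp (lift_ctx c G) (lift_ctx c F).
Proof. induction G; intros; simpl; try rewrite IHG; auto. Qed.

Lemma cont_comp : forall Ea Eb, cont (comp Ea Eb) = cont2 Ea Eb.
Proof. intros. unfold cont, cont2. rewrite lift_ctx_comp, plug_comp. auto. Qed.

Lemma step_ctx : forall t t', step t t' -> forall G, step (plug G t) (plug G t').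
Proof.
  intros t t' H G; destruct H; rewrite <- !plug_comp; constructor; auto.
Qed.

Lemma steps_trans : forall a b c, steps a b -> steps b c -> steps a c.
Proof. intros a b c H; induction H; intros; auto. econstructor; eauto. Qed.

Lemma steps_ctx : forall t t', steps t t' -> forall G, steps (plug G t) (plug G t').
Proof. intros t t' H; induction H; intros; [constructor|]. econstructor; [apply step_ctx; eauto| auto]. Qed.

Lemma steps_one : forall a b, step a b -> steps a b.
Proof. intros; econstructor; eauto; constructor. Qed.

Lemma plug_lam : forall F t b, plug F t = Lam b -> F = Hole /\ t = Lam b.
Proof. destruct F; simpl; intros; try discriminate; auto. Qed.

Definition redex (r : term) : Prop :=
  (exists b v, is_value v /\ r = App (Lam b) v) \/
  (exists E b, pure E /\ r = Reset (plug E (Shift b))) \/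
  (exists v, is_value v /\ r = Reset v).

Lemma redex_not_lam : forall F r b, redex r -> plug F r <> Lam b.
Proof.
  intros F r b Hr H. apply plug_lam in H. destruct H; subst.
  destruct Hr as [[? [? [? ?]]]|[[? [? [? ?]]]|[? [? ?]]]]; discriminate.
Qed.

Lemma redex_not_value : forall F r, redex r -> ~ is_value (plug F r).
Proof. intros F r Hr [b H]. eapply redex_not_lam; eauto. Qed.

Lemma shift_not_lam : forall E b c, plug E (Shift b) <> Lam c.
Proof. intros E b c H. apply plug_lam in H. destruct H; discriminate. Qed.

Lemma shift_no_redex : forall E b, pure E -> forall F r, redex r -> plug E (Shift b) <> plug F r.
Proof.
  induction E; intros b HE F r Hr H; simpl in *.
  - destruct F; simpl in H; try discriminate. subst.
    destruct Hr as [[? [? [? Hq]]]|[[? [? [? Hq]]]|[? [? Hq]]]]; discriminate.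
  - destruct F; simpl in H.
    + subst. destruct Hr as [[? [? [[? Hv] Hq]]]|[[? [? [? Hq]]]|[? [? Hq]]]]; try discriminate.
      injection Hq; intros; subst. eapply shift_not_lam; eauto.
    + injection H; intros; subst. eapply IHE; eauto.
    + injection H; intros; subst. eapply redex_not_lam; eauto.
    + discriminate.
  - destruct F; simpl in H.
    + subst. destruct Hr as [[? [? [[? Hv] Hq]]]|[[? [? [? Hq]]]|[? [? Hq]]]]; try discriminate.
      injection Hq; intros; subst. eapply shift_not_lam; eauto.
    + injection H; intros; subst. eapply shift_not_lam; eauto.
    + injection H; intros; subst. eapply IHE; eauto.
    + discriminate.
  - contradiction.
Qed.

Lemma shift_uniq : forall E1 E2 b1 b2, pure E1 -> pure E2 ->
  plug E1 (Shift b1) = plug E2 (Shift b2) -> E1 = E2 /\ b1 = b2.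
Proof.
  induction E1; destruct E2; simpl; intros b1 b2 H1 H2 H; try discriminate; try contradiction.
  - injection H; auto.
  - injection H; intros; subst. destruct (IHE1 E2 b1 b2); auto. subst; auto.
  - injection H; intros; subst. exfalso; eapply shift_not_lam; eauto.
  - injection H; intros; subst. exfalso; eapply shift_not_lam; eauto.
  - injection H; intros; subst. destruct (IHE1 E2 b1 b2); auto. subst; auto.
Qed.

Lemma hole_vs : forall F r r2, redex r -> redex r2 -> r = plug F r2 -> F = Hole.
Proof.
  intros F r r2 Hr Hr2 H. destruct F; simpl in H; auto; exfalso; subst.
  - destruct Hr as [[? [? [[? Hv] Hq]]]|[[? [? [? Hq]]]|[? [? Hq]]]]; try discriminate.
    injection Hq; intros; subst. eapply redex_not_lam; eauto.
  - destruct Hr as [[? [? [[? Hv] Hq]]]|[[? [? [? Hq]]]|[? [? Hq]]]]; try discriminate.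
    injection Hq; intros; subst. eapply redex_not_lam; eauto.
  - destruct Hr as [[? [? [[? Hv] Hq]]]|[[? [? [Hp Hq]]]|[? [[? Hv] Hq]]]]; try discriminate.
    + injection Hq; intros. eapply shift_no_redex; eauto.
    + injection Hq; intros; subst. eapply redex_not_lam; eauto.
Qed.

Lemma uniq_decomp : forall F1 F2 r1 r2, redex r1 -> redex r2 ->
  plug F1 r1 = plug F2 r2 -> F1 = F2 /\ r1 = r2.
Proof.
  induction F1; intros F2 r1 r2 H1 H2 H; simpl in H.
  - assert (F2 = Hole) by (apply (hole_vs F2 r1 r2); auto). subst; simpl in *; subst; auto.
  - destruct F2; simpl in H.
    + symmetry in H. assert (CAppR t F1 = Hole) by (apply (hole_vs _ r2 r1); auto). discriminate.
    + injection H; intros. destruct (IHF1 F2 r1 r2); auto. subst; auto.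
    + injection H; intros; exfalso; match goal with Hq : _ = _ |- _ => solve [eapply redex_not_lam; [|exact Hq]; auto | eapply redex_not_lam; [|symmetry; exact Hq]; auto] end.
    + discriminate.
  - destruct F2; simpl in H.
    + symmetry in H. assert (CAppL F1 t = Hole) by (apply (hole_vs _ r2 r1); auto). discriminate.
    + injection H; intros; exfalso; match goal with Hq : _ = _ |- _ => solve [eapply redex_not_lam; [|exact Hq]; auto | eapply redex_not_lam; [|symmetry; exact Hq]; auto] end.
    + injection H; intros. destruct (IHF1 F2 r1 r2); auto. subst; auto.
    + discriminate.
  - destruct F2; simpl in H; try discriminate.
    + symmetry in H. assert (CReset F1 = Hole) by (apply (hole_vs _ r2 r1); auto). discriminate.
    + injection H; intros. destruct (IHF1 F2 r1 r2); auto. subst; auto.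
Qed.

Inductive contr : term -> term -> Prop :=
| contr_beta : forall b v, is_value v -> contr (App (Lam b) v) (inst b v)
| contr_shift : forall E b, pure E -> contr (Reset (plug E (Shift b))) (Reset (inst b (cont E)))
| contr_reset : forall v, is_value v -> contr (Reset v) v.

Lemma contr_redex : forall r r', contr r r' -> redex r.
Proof. intros r r' H; destruct H; unfold redex; eauto 7. Qed.

Lemma contr_det : forall r r1 r2, contr r r1 -> contr r r2 -> r1 = r2.
Proof.
  intros r r1 r2 H1 H2; destruct H1; inversion H2; subst; auto.
  - destruct (shift_uniq E0 E b0 b); auto. subst; auto.
  - exfalso. match goal with Hv : is_value _ |- _ => destruct Hv as [c Hc] end. eapply shift_not_lam; eauto.
  - exfalso. match goal with Hv : is_value _ |- _ => destruct Hv as [c Hc] end. eapply shift_not_lam; eauto.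
Qed.

Lemma step_inv : forall t t', step t t' -> exists F r r', contr r r' /\ t = plug F r /\ t' = plug F r'.
Proof. intros t t' H; destruct H; exists F; eexists; eexists; (split; [constructor; eauto | split; reflexivity]). Qed.

Lemma step_det : forall t t1 t2, step t t1 -> step t t2 -> t1 = t2.
Proof.
  intros t t1 t2 H1 H2. apply step_inv in H1; apply step_inv in H2.
  destruct H1 as [F1 [r1 [r1' [C1 [E1 E1']]]]]; destruct H2 as [F2 [r2 [r2' [C2 [E2 E2']]]]].
  subst. destruct (uniq_decomp F1 F2 r1 r2) as [HF Hr]; eauto using contr_redex.
  subst. f_equal. eapply contr_det; eauto.
Qed.

Lemma value_nostep : forall v t, is_value v -> ~ step v t.
Proof.
  intros v t [b Hb] H. apply step_inv in H. destruct H as [F [r [r' [C [E1 E2]]]]].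
  subst. symmetry in E1. eapply redex_not_lam; eauto using contr_redex.
Qed.

Lemma steps_value : forall v w, is_value v -> steps v w -> w = v.
Proof. intros v w Hv H; destruct H; auto. exfalso; eapply value_nostep; eauto. Qed.

Lemma steps_step_det : forall p a p', steps p a -> step p p' -> p = a \/ steps p' a.
Proof.
  intros p a p' H1 H2. destruct H1; auto. right. rewrite (step_det _ _ _ H2 H). auto.
Qed.

Lemma closed_at_lift : forall t n c, closed_at n t -> closed_at (S n) (lift c t).
Proof.
  induction t; intros m c H; simpl in *.
  - destruct (Nat.ltb n c); simpl; lia.
  - auto.
  - destruct H; split; auto.
  - auto.
  - auto.
Qed.

Lemma closed_at_subst : forall t n k u, closed_at (S n) t -> k <= n -> closed_at n u ->
  closed_at n (subst k u t).
Proof.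
  induction t; intros m k u H Hk Hu; simpl in *.
  - destruct (Nat.eqb n k) eqn:E1; auto. apply Nat.eqb_neq in E1.
    destruct (Nat.ltb k n) eqn:E2; simpl. apply Nat.ltb_lt in E2; lia. apply Nat.ltb_ge in E2; lia.
  - apply IHt; auto; lia || apply closed_at_lift; auto.
  - destruct H; split; auto.
  - apply IHt; auto; lia || apply closed_at_lift; auto.
  - auto.
Qed.

Lemma closed_lift_id : forall t n c, closed_at n t -> n <= c -> lift c t = t.
Proof.
  induction t; intros m c H Hc; simpl in *.
  - destruct (Nat.ltb n c) eqn:E; auto. apply Nat.ltb_ge in E; lia.
  - rewrite (IHt (S m)); auto; lia.
  - destruct H; rewrite (IHt1 m), (IHt2 m); auto.
  - rewrite (IHt (S m)); auto; lia.
  - rewrite (IHt m); auto.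
Qed.

Lemma closed_subst_id : forall t n k u, closed_at n t -> n <= k -> subst k u t = t.
Proof.
  induction t; intros m k u H Hc; simpl in *.
  - destruct (Nat.eqb n k) eqn:E1. apply Nat.eqb_eq in E1; lia.
    destruct (Nat.ltb k n) eqn:E; auto. apply Nat.ltb_lt in E; lia.
  - rewrite (IHt (S m)); auto; lia.
  - destruct H; rewrite (IHt1 m), (IHt2 m); auto.
  - rewrite (IHt (S m)); auto; lia.
  - rewrite (IHt m); auto.
Qed.

Fixpoint ctx_closed (n : nat) (F : ctx) : Prop :=
  match F with
  | Hole => True
  | CAppR b F' => closed_at (S n) b /\ ctx_closed n F'
  | CAppL F' u => ctx_closed n F' /\ closed_at n u
  | CReset F' => ctx_closed n F'
  end.

Lemma closed_plug : forall F n t, closed_at n (plug F t) <-> ctx_closed n F /\ closed_at n t.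
Proof.
  induction F; intros n u; simpl; try rewrite IHF; tauto.
Qed.

Lemma ctx_closed_comp : forall G F n, ctx_closed n (comp G F) <-> ctx_closed n G /\ ctx_closed n F.
Proof. induction G; intros F n; simpl; try rewrite IHG; tauto. Qed.

Lemma ctx_closed_lift : forall F n c, ctx_closed n F -> ctx_closed (S n) (lift_ctx c F).
Proof.
  induction F; intros n c H; simpl in *; intuition auto using closed_at_lift.
Qed.

Lemma closed_cont : forall E, ctx_closed 0 E -> closed (cont E).
Proof.
  intros E H. unfold cont, closed. simpl. apply closed_plug. split.
  apply ctx_closed_lift; auto. simpl; lia.
Qed.

Lemma closed_cont2 : forall E' E, ctx_closed 0 E' -> ctx_closed 0 E -> closed (cont2 E' E).
Proof.
  intros. rewrite <- cont_comp. apply closed_cont. apply ctx_closed_comp; auto.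
Qed.

Lemma closed_inst : forall b v, closed_at 1 b -> closed v -> closed (inst b v).
Proof. intros. unfold inst, closed. apply closed_at_subst; auto. Qed.

Lemma step_closed : forall t t', step t t' -> closed t -> closed t'.
Proof.
  intros t t' H Hc; destruct H; unfold closed in *; apply closed_plug in Hc; apply closed_plug;
  destruct Hc as [HF Hr]; split; auto; simpl in *.
  - destruct Hr. apply closed_inst; auto.
  - apply closed_plug in Hr. destruct Hr. apply closed_inst; auto. apply closed_cont; auto.
Qed.

Lemma steps_closed : forall t t', steps t t' -> closed t -> closed t'.
Proof. intros t t' H; induction H; auto. intros; apply IHsteps. eapply step_closed; eauto. Qed.

Definition clenv (E : rel) := forall a b, E a b -> closed a /\ closed b.

Lemma cc_lift : forall E, clenv E -> forall a b, ctx_clos E a b -> forall c, ctx_clos E (lift c a) (lift c b).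
Proof.
  intros E HE a b H; induction H; intros c; simpl; try (constructor; auto; fail).
  - destruct (HE a b H). rewrite (closed_lift_id a 0), (closed_lift_id b 0); auto using cc_rel; lia.
  - destruct (Nat.ltb n c); apply cc_var.
Qed.

Lemma cc_subst : forall E, clenv E -> forall a b, ctx_clos E a b ->
  forall k u u', ctx_clos E u u' -> ctx_clos E (subst k u a) (subst k u' b).
Proof.
  intros E HE a b H; induction H; intros k u u' Hu; simpl; try (constructor; auto using cc_lift; fail).
  - destruct (HE a b H). rewrite (closed_subst_id a 0), (closed_subst_id b 0); auto using cc_rel; lia.
  - destruct (Nat.eqb n k); auto. destruct (Nat.ltb k n); apply cc_var.
Qed.

Inductive hatc (R : rel) : ctx -> ctx -> Prop :=
| hatc_hole : hatc R Hole Hole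
| hatc_appR : forall b0 b1 F0 F1, hatc R F0 F1 -> ctx_clos R (Lam b0) (Lam b1) ->
    hatc R (CAppR b0 F0) (CAppR b1 F1)
| hatc_appL : forall F0 F1 u0 u1, hatc R F0 F1 -> ctx_clos R u0 u1 ->
    hatc R (CAppL F0 u0) (CAppL F1 u1)
| hatc_reset : forall F0 F1, hatc R F0 F1 -> hatc R (CReset F0) (CReset F1).

Lemma cc_plug : forall E G0 G1, hatc E G0 G1 -> forall t0 t1, ctx_clos E t0 t1 ->
  ctx_clos E (plug G0 t0) (plug G1 t1).
Proof. intros E G0 G1 H; induction H; intros; simpl; auto using cc_app, cc_reset. Qed.

Lemma hatc_lift : forall E, clenv E -> forall G0 G1, hatc E G0 G1 -> forall c,
  hatc E (lift_ctx c G0) (lift_ctx c G1).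
Proof.
  intros E HE G0 G1 H; induction H; intros; simpl; constructor; auto.
  - apply (cc_lift E HE _ _ H0 c).
  - apply cc_lift; auto.
Qed.

Lemma hatc_comp : forall E G0 G1 F0 F1, hatc E G0 G1 -> hatc E F0 F1 -> hatc E (comp G0 F0) (comp G1 F1).
Proof. intros E G0 G1 F0 F1 H; induction H; intros; simpl; try constructor; auto. Qed.

Lemma cc_mono : forall (E E2 : rel), (forall a b, E a b -> ctx_clos E2 a b) ->
  forall a b, ctx_clos E a b -> ctx_clos E2 a b.
Proof. intros E E2 Hm a b H; induction H; auto using cc_var, cc_lam, cc_app, cc_shift, cc_reset. Qed.

Lemma hatc_mono : forall (E E2 : rel), (forall a b, E a b -> ctx_clos E2 a b) ->
  forall G0 G1, hatc E G0 G1 -> hatc E2 G0 G1.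
Proof. intros E E2 Hm G0 G1 H; induction H; constructor; eauto using cc_mono. Qed.

Lemma hat_hatc : forall E G0 G1, hat E G0 G1 -> hatc E G0 G1.
Proof. intros E G0 G1 H; induction H; constructor; auto; destruct H0; auto. Qed.

Lemma hat_closed : forall E G0 G1, hat E G0 G1 -> ctx_closed 0 G0 /\ ctx_closed 0 G1.
Proof.
  intros E G0 G1 H; induction H; simpl; auto;
  destruct H0 as [? [H1 H2]]; unfold closed in *; simpl in *; tauto.
Qed.

Lemma hatc_hat : forall E G0 G1, hatc E G0 G1 -> ctx_closed 0 G0 -> ctx_closed 0 G1 -> hat E G0 G1.
Proof.
  intros E G0 G1 H; induction H; simpl; intros; constructor; try tauto;
  unfold tilde, closed; simpl; tauto.
Qed.

Lemma hatc_pure : forall E G0 G1, hatc E G0 G1 -> pure G0 -> pure G1.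
Proof. intros E G0 G1 H; induction H; simpl; auto. Qed.

Lemma cc_cont : forall E, clenv E -> forall G0 G1, hatc E G0 G1 -> ctx_clos E (cont G0) (cont G1).
Proof.
  intros. unfold cont. apply cc_lam. apply cc_reset. apply cc_plug. apply hatc_lift; auto. apply cc_var.
Qed.

Lemma cc_inst : forall E, clenv E -> forall b b' v v', ctx_clos E b b' -> ctx_clos E v v' ->
  ctx_clos E (inst b v) (inst b' v').
Proof. intros. unfold inst. apply cc_subst; auto. Qed.

Definition flipr (E : rel) : rel := fun a b => E b a.

Lemma cc_flip : forall E a b, ctx_clos E a b -> ctx_clos (flipr E) b a.
Proof. intros E a b H; induction H; auto using cc_var, cc_lam, cc_app, cc_shift, cc_reset, cc_rel. Qed.

Lemma hatc_flip : forall E G0 G1, hatc E G0 G1 -> hatc (flipr E) G1 G0.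
Proof. intros E G0 G1 H; induction H; constructor; auto using cc_flip. Qed.

Lemma tilde_flip : forall E a b, tilde E a b -> tilde (flipr E) b a.
Proof. intros E a b [H [H1 H2]]; split; auto using cc_flip. Qed.

Lemma hat_flip : forall E G0 G1, hat E G0 G1 -> hat (flipr E) G1 G0.
Proof. intros E G0 G1 H; induction H; constructor; auto using tilde_flip. Qed.

Lemma stuck_decomp : forall t, closed t -> stuck t -> exists E c, pure E /\ t = plug E (Shift c).
Proof.
  induction t; intros Hc [Hv Hs]; unfold closed in *; simpl in Hc.
  - lia.
  - exfalso; apply Hv; eexists; eauto.
  - destruct Hc as [H1 H2].
    destruct (classic (exists t', step t1 t')) as [[t' Ht]|Hn1].
    { exfalso. apply (Hs (App t' t2)). apply (step_ctx _ _ Ht (CAppL Hole t2)). }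
    destruct (classic (is_value t1)) as [[b Hb]|Hv1].
    + subst. destruct (classic (exists t', step t2 t')) as [[t' Ht]|Hn2].
      { exfalso. apply (Hs (App (Lam b) t')). apply (step_ctx _ _ Ht (CAppR b Hole)). }
      destruct (classic (is_value t2)) as [Hv2|Hv2].
      { exfalso. apply (Hs (inst b t2)). apply (step_beta Hole). auto. }
      destruct IHt2 as [E [c [HE Heq]]]; auto.
      { split; auto. intros t' H; apply Hn2; eauto. }
      exists (CAppR b E), c; subst; simpl; auto.
    + destruct IHt1 as [E [c [HE Heq]]]; auto.
      { split; auto. intros t' H; apply Hn1; eauto. }
      exists (CAppL E t2), c; subst; simpl; auto.
  - exists Hole, t; simpl; auto.
  - exfalso.
    destruct (classic (exists t', step t t')) as [[t' Ht]|Hn1].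
    { apply (Hs (Reset t')). apply (step_ctx _ _ Ht (CReset Hole)). }
    destruct (classic (is_value t)) as [Hv1|Hv1].
    { apply (Hs t). apply (step_reset Hole). auto. }
    destruct IHt as [E [c [HE Heq]]]; auto.
    { split; auto. intros t' H; apply Hn1; eauto. }
    subst. apply (Hs (Reset (inst c (cont E)))). apply (step_shift Hole). auto.
Qed.

Lemma reset_not_stuck : forall a, closed (Reset a) -> ~ stuck (Reset a).
Proof.
  intros a Hc Hs. destruct (stuck_decomp _ Hc Hs) as [E [c [HE Heq]]].
  destruct E; simpl in Heq; try discriminate; contradiction.
Qed.

Lemma relaxed_clenv : forall E, relaxed_env E -> clenv E.
Proof. intros E H a b Hab. destruct (H a b Hab) as [? [? _]]; auto. Qed.

Lemma steps_NE : forall E, relaxed_env E -> forall a a' b, step a a' -> ~ E a b.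
Proof.
  intros E HE a a' b Hs Hab. destruct (HE a b Hab) as [_ [_ [[Hv _]|[[_ Hst] _]]]].
  - eapply value_nostep; eauto.
  - eapply Hst; eauto.
Qed.

Lemma cc_value : forall E, relaxed_env E -> forall v x, ctx_clos E v x -> is_value v -> is_value x.
Proof.
  intros E HE v x H Hv. inversion H; subst.
  - destruct (HE v x H0) as [_ [_ [[_ ?]|[[? _] _]]]]; tauto.
  - destruct Hv; discriminate.
  - eexists; eauto.
  - destruct Hv; discriminate.
  - destruct Hv; discriminate.
  - destruct Hv; discriminate.
Qed.

Lemma cc_lam_inv : forall E, relaxed_env E -> forall b x, ctx_clos E (Lam b) x -> exists b', x = Lam b'.
Proof.
  intros E HE b x H. assert (is_value x) by (eapply cc_value; eauto; eexists; eauto).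
  destruct H0 as [b' ?]; eauto.
Qed.

Lemma cc_reset_inv : forall E, relaxed_env E -> forall a x, ctx_clos E (Reset a) x ->
  exists a', x = Reset a' /\ ctx_clos E a a'.
Proof.
  intros E HE a x H. inversion H; subst; eauto.
  destruct (HE _ _ H0) as [Hc [_ [[[? ?] _]|[Hs _]]]]; try discriminate.
  exfalso; eapply reset_not_stuck; eauto.
Qed.

Lemma D1 : forall E, relaxed_env E -> forall t t', step t t' ->
  forall F x, ctx_clos E (plug F t) x -> exists F1 t1, x = plug F1 t1 /\ hatc E F F1 /\ ctx_clos E t t1.
Proof.
  intros E HE t t' Hst F. induction F; intros x H; simpl in H.
  - exists Hole, x; simpl; repeat split; auto; constructor.
  - inversion H; subst.
    + exfalso. exact (steps_NE E HE _ _ x (step_ctx _ _ Hst (CAppR t0 F)) H0).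
    + destruct (IHF _ H4) as [F1 [t1 [? [? ?]]]]. subst.
      destruct (cc_lam_inv E HE _ _ H2) as [b' ?]; subst.
      exists (CAppR b' F1), t1; simpl; repeat split; auto; constructor; auto.
  - inversion H; subst.
    + exfalso. exact (steps_NE E HE _ _ x (step_ctx _ _ Hst (CAppL F t0)) H0).
    + destruct (IHF _ H2) as [F1 [t1 [? [? ?]]]]. subst.
      exists (CAppL F1 b'), t1; simpl; repeat split; auto; constructor; auto.
  - inversion H; subst.
    + exfalso. exact (steps_NE E HE _ _ x (step_ctx _ _ Hst (CReset F)) H0).
    + destruct (IHF _ H1) as [F1 [t1 [? [? ?]]]]. subst.
      exists (CReset F1), t1; simpl; repeat split; auto; constructor; auto.
Qed.

Lemma D2 : forall E, relaxed_env E -> forall b Ep, pure Ep -> forall y, ctx_clos E (plug Ep (Shift b)) y ->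
  (exists Ea Eb Ea1 z, Ep = comp Ea Eb /\ pure Ea /\ pure Eb /\ hatc E Ea Ea1 /\ pure Ea1 /\
     y = plug Ea1 z /\ E (plug Eb (Shift b)) z) \/
  (exists Ep1 b1, y = plug Ep1 (Shift b1) /\ hatc E Ep Ep1 /\ pure Ep1 /\ ctx_clos E b b1).
Proof.
  intros E HE b Ep. induction Ep; intros HP y H; simpl in *.
  - inversion H; subst.
    + left. exists Hole, Hole, Hole, y; simpl; repeat split; auto; constructor.
    + right. exists Hole, b0; simpl; repeat split; auto; constructor.
  - inversion H; subst.
    + left. exists Hole, (CAppR t Ep), Hole, y; simpl; repeat split; auto; constructor.
    + destruct (cc_lam_inv E HE _ _ H2) as [bl ?]; subst.
      destruct (IHEp HP _ H4) as [[Ea [Eb [Ea1 [z [? [? [? [? [? [? ?]]]]]]]]]]|[Ep1 [b1 [? [? [? ?]]]]]]; subst.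
      * left. exists (CAppR t Ea), Eb, (CAppR bl Ea1), z; simpl; repeat split; auto; constructor; auto.
      * right. exists (CAppR bl Ep1), b1; simpl; repeat split; auto; constructor; auto.
  - inversion H; subst.
    + left. exists Hole, (CAppL Ep t), Hole, y; simpl; repeat split; auto; constructor.
    + destruct (IHEp HP _ H2) as [[Ea [Eb [Ea1 [z [? [? [? [? [? [? ?]]]]]]]]]]|[Ep1 [b1 [? [? [? ?]]]]]]; subst.
      * left. exists (CAppL Ea t), Eb, (CAppL Ea1 b'), z; simpl; repeat split; auto; constructor; auto.
      * right. exists (CAppL Ep1 b'), b1; simpl; repeat split; auto; constructor; auto.
  - contradiction.
Qed.

Definition Core (X : envrel) (E : rel) (a0 a1 : term) : Prop :=
  (exists G0 G1 t0 t1, a0 = plug G0 t0 /\ a1 = plug G1 t1 /\ hatc E G0 G1 /\ trip X E t0 t1)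
  \/ (envs X E /\ ctx_clos E a0 a1).

Definition RelC (X : envrel) (E : rel) (s0 s1 : term) : Prop :=
  exists a0 a1, steps s0 a0 /\ steps s1 a1 /\ Core X E a0 a1.

Definition incl (E E2 : rel) := forall a b, E a b -> E2 a b.


Lemma rb_env : forall X, relaxed_bisim X -> forall E, envs X E -> relaxed_env E.
Proof. intros X [[H _] _] E. auto. Qed.

Lemma rb_trip : forall X, relaxed_bisim X -> forall E t0 t1, trip X E t0 t1 ->
  relaxed_env E /\ closed t0 /\ closed t1.
Proof. intros X [[_ H] _]. auto. Qed.

Lemma Core_env : forall X, relaxed_bisim X -> forall E a0 a1, Core X E a0 a1 -> relaxed_env E.
Proof.
  intros X HX E a0 a1 [[G0 [G1 [t0 [t1 [_ [_ [_ H]]]]]]]|[H _]].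
  - eapply rb_trip; eauto.
  - eapply rb_env; eauto.
Qed.

Lemma Sim_val : forall X, relaxed_bisim X -> forall E v0 a1, Core X E v0 a1 -> is_value v0 ->
  exists E2 v1, incl E E2 /\ envs X E2 /\ is_value v1 /\ steps a1 v1 /\ ctx_clos E2 v0 v1.
Proof.
  intros X HX E v0 a1 HC Hv.
  destruct HC as [[G0 [G1 [t0 [t1 [E0 [E1 [HG Ht]]]]]]]|[HE Hc]].
  - destruct Hv as [b Hb]. subst. apply plug_lam in Hb. destruct Hb; subst.
    inversion HG; subst. simpl.
    destruct HX as [_ [H1 _]]. destruct (H1 _ _ _ Ht) as [_ [Hb _]].
    destruct (Hb (ex_intro _ b eq_refl)) as [v1 [Hv1 [Hs He]]].
    exists (env_add E (Lam b) v1), v1. repeat split; auto.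
    + intros a c H; left; auto.
    + apply cc_rel. right; auto.
  - exists E, a1. repeat split; auto. intros a c H; auto.
    eapply cc_value; eauto. eapply rb_env; eauto. constructor.
Qed.

Lemma rb_2a : forall X, relaxed_bisim X -> forall E, envs X E ->
  forall b0 b1 v0 v1, E (Lam b0) (Lam b1) -> is_value v0 -> is_value v1 ->
        tilde E v0 v1 -> trip X E (inst b0 v0) (inst b1 v1).
Proof. intros X [_ [_ H]] E HE. apply (H E HE). Qed.

Lemma rb_2b : forall X, relaxed_bisim X -> forall E, envs X E ->
  forall E0 E1 s0 s1, pure E0 -> pure E1 ->
        E (plug E0 (Shift s0)) (plug E1 (Shift s1)) ->
        forall E0' E1', pure E0' -> pure E1' -> hat E E0' E1' ->
        trip X E (Reset (inst s0 (cont2 E0' E0))) (Reset (inst s1 (cont2 E1' E1))).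
Proof. intros X [_ [_ H]] E HE. apply (H E HE). Qed.

Lemma Sim_passive : forall X, relaxed_bisim X -> forall E a0 a1 a0', envs X E -> ctx_clos E a0 a1 ->
  closed a0 -> closed a1 -> step a0 a0' -> exists a1', steps a1 a1' /\ Core X E a0' a1'.
Proof.
  intros X HX E a0 a1 a0' HEX Hcc Hc0 Hc1 Hst.
  assert (HE : relaxed_env E) by (eapply rb_env; eauto).
  assert (HCl : clenv E) by (apply relaxed_clenv; auto).
  destruct Hst as [F b v Hv | F Ep b HEp | F v Hv].
  -
    destruct (D1 E HE _ _ (step_beta Hole b v Hv) F a1 Hcc) as [F1 [t1 [Ea1 [HF Ht]]]].
    subst a1. inversion Ht; subst.
    { exfalso. exact (steps_NE E HE _ _ _ (step_beta Hole b v Hv) H). }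
    rename b' into y.
    destruct (cc_lam_inv E HE _ _ H1) as [b' ?]; subst.
    assert (Hy : is_value y) by (eapply cc_value; eauto).
    unfold closed in Hc0, Hc1. apply closed_plug in Hc0; apply closed_plug in Hc1.
    destruct Hc0 as [HF0 [Hb0 Hv0]]; destruct Hc1 as [HF1 [Hb1 Hv1]].
    exists (plug F1 (inst b' y)). split.
    { apply steps_one. apply step_beta; auto. }
    inversion H1; subst.
    + left. exists F, F1, (inst b v), (inst b' y). repeat split; auto.
      apply rb_2a; auto. split; auto.
    + right. split; auto. apply cc_plug; auto. apply cc_inst; auto.
  -
    destruct (D1 E HE _ _ (step_shift Hole Ep b HEp) F a1 Hcc) as [F1 [t1 [Ea1 [HF Ht]]]].
    subst a1. destruct (cc_reset_inv E HE _ _ Ht) as [y [? Hy]]; subst t1.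
    unfold closed in Hc0, Hc1. apply closed_plug in Hc0; apply closed_plug in Hc1.
    destruct Hc0 as [HF0 Hr0]; destruct Hc1 as [HF1 Hr1]. simpl in Hr0, Hr1.
    destruct (D2 E HE b Ep HEp y Hy) as
      [[Ea [Eb [Ea1' [z [? [HpEa [HpEb [HEa [HpEa1 [? Hz]]]]]]]]]]|[Ep1 [b1 [? [HEp1 [HpEp1 Hb]]]]]]; subst.
    + destruct (HE _ _ Hz) as [Hcz0 [Hcz [[Hvz _]|[_ Hsz]]]].
      { exfalso; destruct Hvz as [c Hc]; eapply shift_not_lam; eauto. }
      destruct (stuck_decomp z Hcz Hsz) as [Ez [c [HEz ?]]]; subst z.
      apply closed_plug in Hr0; apply closed_plug in Hr1.
      destruct Hr0 as [Hr0 _]; destruct Hr1 as [Hr1 _].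
      apply ctx_closed_comp in Hr0. destruct Hr0 as [HEa0 _].
      assert (Hhat : hat E Ea Ea1') by (apply hatc_hat; auto).
      pose proof (rb_2b X HX E HEX Eb Ez b c HpEb HEz Hz Ea Ea1' HpEa HpEa1 Hhat) as Htr.
      exists (plug F1 (Reset (inst c (cont (comp Ea1' Ez))))). split.
      { apply steps_one. rewrite <- plug_comp. apply step_shift. apply pure_comp; auto. }
      left. exists F, F1, (Reset (inst b (cont2 Ea Eb))), (Reset (inst c (cont2 Ea1' Ez))).
      rewrite !cont_comp. repeat split; auto.
    + exists (plug F1 (Reset (inst b1 (cont Ep1)))). split.
      { apply steps_one. apply step_shift; auto. }
      right. split; auto. apply cc_plug; auto. apply cc_reset. apply cc_inst; auto.
      apply cc_cont; auto.
  -
    destruct (D1 E HE _ _ (step_reset Hole v Hv) F a1 Hcc) as [F1 [t1 [Ea1 [HF Ht]]]].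
    subst a1. destruct (cc_reset_inv E HE _ _ Ht) as [y [? Hy]]; subst t1.
    exists (plug F1 y). split.
    { apply steps_one. apply step_reset. eapply cc_value; eauto. }
    right. split; auto. apply cc_plug; auto.
Qed.

Lemma incl_env_add : forall E a b, incl E (env_add E a b).
Proof. intros E a b x y H; left; auto. Qed.

Lemma cc_incl : forall E E2, incl E E2 -> forall a b, ctx_clos E a b -> ctx_clos E2 a b.
Proof. intros E E2 Hi a b H. apply (cc_mono E E2); auto. intros; apply cc_rel; auto. Qed.

Lemma hatc_incl : forall E E2, incl E E2 -> forall a b, hatc E a b -> hatc E2 a b.
Proof. intros E E2 Hi a b H. apply (hatc_mono E E2); auto. intros; apply cc_rel; auto. Qed.

Lemma Sim_step : forall X, relaxed_bisim X -> forall E a0 a1 a0', Core X E a0 a1 ->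
  closed a0 -> closed a1 -> step a0 a0' ->
  exists E2 a1', incl E E2 /\ steps a1 a1' /\ RelC X E2 a0' a1'.
Proof.
  intros X HX E a0 a1 a0' HC Hc0 Hc1 Hst.
  destruct HC as [[G0 [G1 [t0 [t1 [E0 [E1 [HG Ht]]]]]]]|[HEX Hcc]].
  2:{ destruct (Sim_passive X HX E a0 a1 a0' HEX Hcc Hc0 Hc1 Hst) as [a1' [? ?]].
      exists E, a1'. repeat split; auto. intros x y; auto.
      exists a0', a1'; repeat split; auto; constructor. }
  subst a0 a1.
  pose proof HX as HX'. destruct HX' as [_ [H1 _]].
  destruct (H1 _ _ _ Ht) as [Ha [Hb [Hc _]]].
  assert (Fin : forall E2 t1', envs X E2 -> incl E E2 -> E2 t0 t1' -> steps t1 t1' ->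
     exists E3 a1', incl E E3 /\ steps (plug G1 t1) a1' /\ RelC X E3 a0' a1').
  { intros E2 t1' HE2 Hi He2 Hs.
    assert (Hcc : ctx_clos E2 (plug G0 t0) (plug G1 t1')).
    { apply cc_plug. eapply hatc_incl; eauto. apply cc_rel; auto. }
    assert (Hs' : steps (plug G1 t1) (plug G1 t1')) by (apply steps_ctx; auto).
    destruct (Sim_passive X HX E2 _ _ a0' HE2 Hcc Hc0 (steps_closed _ _ Hs' Hc1) Hst) as [a1'' [? ?]].
    exists E2, a1''. repeat split; auto. eapply steps_trans; eauto.
    exists a0', a1''; repeat split; auto; constructor. }
  destruct (classic (exists t0'', step t0 t0'')) as [[t0'' Hs0]|Hn].
  - assert (a0' = plug G0 t0'') by (eapply step_det; eauto; apply step_ctx; auto). subst a0'.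
    destruct (Ha _ Hs0) as [t1' [Hs1 Ht']].
    exists E, (plug G1 t1'). repeat split; auto. intros x y; auto. apply steps_ctx; auto.
    exists (plug G0 t0''), (plug G1 t1'). split; [constructor|split; [constructor|]].
    left. exists G0, G1, t0'', t1'; auto.
  - destruct (classic (is_value t0)) as [Hv|Hv].
    + destruct (Hb Hv) as [v1 [_ [Hs He]]].
      apply (Fin _ v1 He); auto using incl_env_add. right; auto.
    + assert (Hst0 : stuck t0) by (split; auto; intros t' H; apply Hn; eauto).
      destruct (Hc Hst0) as [t1' [_ [Hs He]]].
      apply (Fin _ t1' He); auto using incl_env_add. right; auto.
Qed.

Definition flipX (X : envrel) : envrel :=
  {| envs := fun E => envs X (flipr E); trip := fun E a b => trip X (flipr E) b a |}.

Lemma flipr_env_add : forall E a b, flipr (env_add E a b) = env_add (flipr E) b a.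
Proof.
  intros. unfold flipr, env_add. apply functional_extensionality; intro x.
  apply functional_extensionality; intro y. apply propositional_extensionality. tauto.
Qed.

Lemma relaxed_env_flip : forall E, relaxed_env E -> relaxed_env (flipr E).
Proof. intros E H a b Hab. destruct (H b a Hab) as [? [? ?]]. unfold flipr; tauto. Qed.

Lemma flip_bisim : forall X, relaxed_bisim X -> relaxed_bisim (flipX X).
Proof.
  intros X [[He Ht] [H1 H2]]. split; [split|split].
  - intros E HE. exact (relaxed_env_flip _ (He _ HE)).
  - intros E t0 t1 H. destruct (Ht _ _ _ H) as [? [? ?]]. split; auto.
    exact (relaxed_env_flip _ H0).
  - intros E t0 t1 H. simpl in H. destruct (H1 _ _ _ H) as [Ha [Hb [Hc [Hd1 [Hd2 Hd3]]]]].
    simpl. repeat split; auto.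
    + intros Hv. destruct (Hd2 Hv) as [v [? [? ?]]]. exists v. rewrite flipr_env_add. auto.
    + intros Hv. destruct (Hd3 Hv) as [v [? [? ?]]]. exists v. rewrite flipr_env_add. auto.
    + intros Hv. destruct (Hb Hv) as [v [? [? ?]]]. exists v. rewrite flipr_env_add. auto.
    + intros Hv. destruct (Hc Hv) as [v [? [? ?]]]. exists v. rewrite flipr_env_add. auto.
  - intros E HE. simpl in HE. destruct (H2 _ HE) as [Ha Hb]. split.
    + intros b0 b1 v0 v1 Hl Hv0 Hv1 Ht'. simpl. apply Ha; auto. apply tilde_flip; auto.
    + intros E0 E1 s0 s1 HE0 HE1 Hp E0' E1' HE0' HE1' Hh. simpl. apply Hb; auto.
      apply hat_flip; auto.
Qed.

Lemma Core_flip : forall X E a0 a1, Core X E a0 a1 -> Core (flipX X) (flipr E) a1 a0.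
Proof.
  intros X E a0 a1 [[G0 [G1 [t0 [t1 [? [? [HG Ht]]]]]]]|[HE Hc]].
  - left. exists G1, G0, t1, t0. repeat split; auto. apply hatc_flip; auto.
  - right. split; auto. apply cc_flip; auto.
Qed.

Lemma Core_unflip : forall X E a0 a1, Core (flipX X) E a0 a1 -> Core X (flipr E) a1 a0.
Proof.
  intros X E a0 a1 [[G0 [G1 [t0 [t1 [? [? [HG Ht]]]]]]]|[HE Hc]].
  - left. exists G1, G0, t1, t0. repeat split; auto. apply hatc_flip; auto.
  - right. split; auto. apply cc_flip; auto.
Qed.

Definition upto (E' E : rel) := forall a b, E' a b -> tilde E a b /\ is_value a /\ is_value b.

Definition Y (X : envrel) : envrel :=
  {| envs := fun E' => exists E, envs X E /\ upto E' E;
     trip := fun E' s0 s1 => exists E, upto E' E /\ closed s0 /\ closed s1 /\ RelC X E s0 s1 |}.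

Lemma mkY : forall X E' E s0 s1, upto E' E -> closed s0 -> closed s1 -> RelC X E s0 s1 ->
  trip (Y X) E' s0 s1.
Proof. intros. simpl. exists E. auto. Qed.

Lemma mkRel : forall X E s0 s1 a0 a1, steps s0 a0 -> steps s1 a1 -> Core X E a0 a1 -> RelC X E s0 s1.
Proof. intros. exists a0, a1. auto. Qed.

Lemma tilde_incl : forall E E2, incl E E2 -> forall a b, tilde E a b -> tilde E2 a b.
Proof. intros E E2 Hi a b [H [? ?]]; split; auto. eapply cc_incl; eauto. Qed.

Lemma upto_incl : forall E' E E2, upto E' E -> incl E E2 -> upto E' E2.
Proof. intros E' E E2 H Hi a b Hab. destruct (H a b Hab) as [? ?]. split; auto. eapply tilde_incl; eauto. Qed.

Lemma incl_trans : forall E1 E2 E3, incl E1 E2 -> incl E2 E3 -> incl E1 E3.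
Proof. unfold incl; auto. Qed.

Lemma LeftSim : forall X, relaxed_bisim X -> forall E' p0 p1, trip (Y X) E' p0 p1 ->
  (forall p0', step p0 p0' -> trip (Y X) E' p0' p1) /\
  (forall v0, is_value v0 -> step p0 v0 ->
     exists v1, is_value v1 /\ steps p1 v1 /\ envs (Y X) (env_add E' v0 v1)).
Proof.
  intros X HX E' p0 p1 [E [Hu [Hc0 [Hc1 [a0 [a1 [Hs0 [Hs1 HC]]]]]]]].
  assert (Hca1 : closed a1) by (eapply steps_closed; eauto).
  split.
  - intros p0' Hst. assert (Hc0' : closed p0') by (eapply step_closed; eauto).
    destruct (steps_step_det _ _ _ Hs0 Hst) as [?|Hs].
    + subst a0. destruct (Sim_step X HX E p0 a1 p0' HC Hc0 Hca1 Hst) as [E2 [a1' [Hi [Hs [x0 [x1 [? [? ?]]]]]]]].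
      apply (mkY X E' E2); auto. eapply upto_incl; eauto.
      apply (mkRel X E2 p0' p1 x0 x1); auto. eapply steps_trans; eauto. eapply steps_trans; eauto.
    + apply (mkY X E' E); auto. apply (mkRel X E p0' p1 a0 a1); auto.
  - intros v0 Hv Hst. assert (Hc0' : closed v0) by (eapply step_closed; eauto).
    assert (Fin : forall E2 x1, incl E E2 -> steps p1 x1 -> Core X E2 v0 x1 ->
       exists v1, is_value v1 /\ steps p1 v1 /\ envs (Y X) (env_add E' v0 v1)).
    { intros E2 x1 Hi Hx HC2.
      destruct (Sim_val X HX E2 v0 x1 HC2 Hv) as [E3 [v1 [Hi3 [HE3 [Hv1 [Hs Hcc]]]]]].
      assert (Hsv : steps p1 v1) by (eapply steps_trans; eauto).
      exists v1. repeat split; auto. simpl. exists E3. split; auto.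
      intros a b [Hab|[? ?]]; subst.
      + destruct (Hu a b Hab) as [Ht ?]. split; auto. eapply tilde_incl; [|eauto].
        eapply incl_trans; eauto.
      + repeat split; auto. eapply steps_closed; eauto. }
    destruct (steps_step_det _ _ _ Hs0 Hst) as [?|Hs].
    + subst a0. destruct (Sim_step X HX E p0 a1 v0 HC Hc0 Hca1 Hst) as [E2 [a1' [Hi [Hs [x0 [x1 [Hx0 [Hx1 HC2]]]]]]]].
      rewrite (steps_value _ _ Hv Hx0) in HC2.
      apply (Fin E2 x1); auto. eapply steps_trans; eauto. eapply steps_trans; eauto.
    + rewrite (steps_value _ _ Hv Hs) in HC. apply (Fin E a1); auto. intros x y; auto.
Qed.

Lemma Y_flip : forall X E' s0 s1, trip (Y X) E' s0 s1 -> trip (Y (flipX X)) (flipr E') s1 s0.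
Proof.
  intros X E' s0 s1 [E [Hu [Hc0 [Hc1 [a0 [a1 [Hs0 [Hs1 HC]]]]]]]].
  apply (mkY _ _ (flipr E)); auto.
  - intros a b Hab. destruct (Hu b a Hab) as [? [? ?]]. split; auto. apply tilde_flip; auto.
  - apply (mkRel _ _ _ _ a1 a0); auto. apply Core_flip; auto.
Qed.

Lemma Y_unflip : forall X E' s0 s1, trip (Y (flipX X)) E' s0 s1 -> trip (Y X) (flipr E') s1 s0.
Proof.
  intros X E' s0 s1 [E [Hu [Hc0 [Hc1 [a0 [a1 [Hs0 [Hs1 HC]]]]]]]].
  apply (mkY _ _ (flipr E)); auto.
  - intros a b Hab. destruct (Hu b a Hab) as [? [? ?]]. split; auto. apply tilde_flip; auto.
  - apply (mkRel _ _ _ _ a1 a0); auto. apply Core_unflip; auto.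
Qed.

Lemma cc_upto : forall E' E, upto E' E -> forall a b, ctx_clos E' a b -> ctx_clos E a b.
Proof. intros E' E Hu. apply cc_mono. intros a b H. destruct (Hu a b H) as [[? _] _]; auto. Qed.

Lemma tilde_upto : forall E' E, upto E' E -> forall a b, tilde E' a b -> tilde E a b.
Proof. intros E' E Hu a b [H [? ?]]. split; auto. eapply cc_upto; eauto. Qed.

Lemma hat_upto : forall E' E, upto E' E -> forall G0 G1, hat E' G0 G1 -> hat E G0 G1.
Proof. intros E' E Hu G0 G1 H; induction H; constructor; eauto using tilde_upto. Qed.

Lemma upto_prog : forall E' E, upto E' E -> prog_env E'.
Proof. intros E' E Hu a b H. destruct (Hu a b H) as [[? [? ?]] [? ?]]. auto. Qed.

Lemma Y_bisim : forall X, relaxed_bisim X -> prog_bisim (Y X).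
Proof.
  intros X HX. split; [split|split; [|split]].
  - intros E' [E [_ Hu]]. eapply upto_prog; eauto.
  - intros E' t0 t1 [E [Hu [? [? _]]]]. split; auto. eapply upto_prog; eauto.
  - intros E' t0 t1 [E [Hu [Hc0 [Hc1 [a0 [a1 [Hs0 [Hs1 HC]]]]]]]] _ E0 E1 HE0 HE1 Hh.
    pose proof (hat_upto _ _ Hu _ _ Hh) as Hh'.
    destruct (hat_closed _ _ _ Hh') as [HC0 HC1].
    pose proof (hat_hatc _ _ _ Hh') as Hc.
    apply (mkY X E' E); auto.
    + unfold closed in *; simpl. apply closed_plug; auto.
    + unfold closed in *; simpl. apply closed_plug; auto.
    + apply (mkRel X E _ _ (Reset (plug E0 a0)) (Reset (plug E1 a1))).
      * apply (steps_ctx _ _ Hs0 (CReset E0)).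
      * apply (steps_ctx _ _ Hs1 (CReset E1)).
      * destruct HC as [[G0 [G1 [u0 [u1 [? [? [HG Ht]]]]]]]|[HE Hcc]].
        -- left. exists (CReset (comp E0 G0)), (CReset (comp E1 G1)), u0, u1. subst.
           simpl. rewrite !plug_comp. repeat split; auto. constructor. apply hatc_comp; auto.
        -- right. split; auto. apply cc_reset. apply cc_plug; auto.
  - intros E' p0 p1 Hp0 Hp1 Ht.
    destruct (LeftSim X HX E' p0 p1 Ht) as [La Lb].
    pose proof (Y_flip X E' p0 p1 Ht) as Htf.
    destruct (LeftSim (flipX X) (flip_bisim X HX) (flipr E') p1 p0 Htf) as [Ra Rb].
    repeat split.
    + intros p0' _ Hs. exists p1. repeat split; auto. constructor.
    + intros v0 Hv Hs. apply Lb; auto.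
    + intros p1' _ Hs. exists p0. repeat split; auto. constructor.
      exact (Y_unflip _ _ _ _ (Ra p1' Hs)).
    + intros v1 Hv Hs. destruct (Rb v1 Hv Hs) as [v0 [Hv0 [Hs0 [E [HE Hu]]]]].
      exists v0. repeat split; auto. simpl. exists (flipr E). split; auto.
      intros a b Hab. destruct (Hu b a) as [? [? ?]].
      { destruct Hab as [Hab|[? ?]]; [left; exact Hab|right; subst; auto]. }
      split; auto. apply tilde_flip; auto.
  - intros E' [E [HE Hu]] b0 b1 v0 v1 Hl Hv0 Hv1 Ht.
    destruct (Hu _ _ Hl) as [[Hcc [Hcb0 Hcb1]] _].
    pose proof (tilde_upto _ _ Hu _ _ Ht) as [Hvv [Hcv0 Hcv1]].
    inversion Hcc; subst.
    + pose proof (rb_2a X HX E HE b0 b1 v0 v1 H Hv0 Hv1 (conj Hvv (conj Hcv0 Hcv1))) as Htr.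
      destruct (rb_trip X HX _ _ _ Htr) as [_ [? ?]].
      apply (mkY X E' E); auto. apply (mkRel X E _ _ (inst b0 v0) (inst b1 v1)); [constructor|constructor|].
      left. exists Hole, Hole, (inst b0 v0), (inst b1 v1). repeat split; auto. constructor.
    + assert (HCl : clenv E) by (apply relaxed_clenv; eapply rb_env; eauto).
      apply (mkY X E' E); auto.
      * apply closed_inst; auto.
      * apply closed_inst; auto.
      * apply (mkRel X E _ _ (inst b0 v0) (inst b1 v1)); [constructor|constructor|].
        right. split; auto. apply cc_inst; auto.
Qed.

Theorem lemma12 (t0 t1 : term) :
  closed t0 -> closed t1 ->
  relaxed_bisimilar empty_env t0 t1 -> program_bisimilar empty_env t0 t1.
Proof.
  intros Hc0 Hc1 [X [HX Ht]]. exists (Y X). split; [apply Y_bisim; auto|].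
  apply (mkY X empty_env empty_env); auto.
  - intros a b H; destruct H.
  - apply (mkRel X empty_env _ _ t0 t1); [constructor|constructor|].
    left. exists Hole, Hole, t0, t1. repeat split; auto. constructor.
Qed.
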